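(* Let $1<S\le N$, $L$ a band-width vector, $\dot W$ an $L$-admissible matrix, $W_\varepsilon=\mathrm{Id}+\varepsilon\dot W$, $k\in\mathbb N$, $\beta\in\Gamma$, and $P_{\varepsilon,\beta}=D_{k,\beta,L}W_\varepsilon$. Let $\gamma>0$ be such that $P_{\varepsilon,\beta}$ has $N$ distinct eigenvalues for $0<\varepsilon<\gamma$, and for such $\varepsilon$ let $f^{(1)}_\varepsilon,\dots,f^{(N)}_\varepsilon$ be a unit-norm eigenbasis with eigenvalues $\lambda^{(\ell)}_\varepsilon$, labelled so that $\lambda^{(\ell)}_\varepsilon\to e^{-2\pi ik\beta_s}$ as $\varepsilon\to0$ whenever $\ell\in B_s$. Then for every $1\le\ell\ne m\le N$, $\lim_{\varepsilon\to0}\langle f^{(\ell)}_\varepsilon,f^{(m)}_\varepsilon\rangle=0$.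
   Context: A band-width vector is $L=(L_1,\dots,L_S)$ of positive integers with $\sum_sL_s=N$; $N_0=0$, $N_s=N_{s-1}+L_s$, $B_s=\{j:N_{s-1}<j\le N_s\}$. $D_{k,\beta,L}$ is the diagonal matrix with $j$-th entry $e^{-2\pi ik\beta_s}$ for $j\in B_s$. $\dot W$ is $L$-admissible if it is real symmetric and (1) $\dot W_{ij}\ge0$ for $i\ne j$, $\sum_j\dot W_{ij}=0$ for all $i$; (2) $\dot W$ has $N$ distinct eigenvalues; (3) each $\hat W_s=(\dot W_{jk})_{j,k\in B_s}$ has $L_s$ distinct eigenvalues. $\Gamma=\{\beta\in\mathbb R^S: e^{-2\pi ik\beta_{s_1}}\neq e^{-2\pi ik\beta_{s_2}}\text{ for all }k\ne0,\ s_1\ne s_2\}$. $\langle v,w\rangle=\sum_jv_j\overline{w_j}$. *)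

(* Defs.v *)
From HB Require Import structures.
From mathcomp Require Import all_boot all_order all_algebra.
From mathcomp Require Import all_classical all_reals all_analysis.
From mathcomp Require Import complex.
Set Implicit Arguments. Unset Strict Implicit. Unset Printing Implicit Defensive.
Import Order.TTheory GRing.Theory Num.Theory.
Import numFieldNormedType.Exports.
Local Open Scope ring_scope.
Local Open Scope complex_scope.

Section Defs.
Variable R : realType.

Definition expi (x : R) : R[i] := cos x +i* sin x.

(* start offset N_{s-1} of block s (0-indexed: sum of L_t for t < s) *)
Definition Nstart (S : nat) (L : 'I_S -> nat) (s : 'I_S) : nat :=
  (\sum_(t < S | (t < s)%N) L t)%N.

Definition inB (S : nat) (L : 'I_S -> nat) (s : 'I_S) (j : nat) : bool :=
  (Nstart L s <= j < Nstart L s + L s)%N.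

Definition bandwidth (S N : nat) (L : 'I_S -> nat) : Prop :=
  (forall s, (0 < L s)%N) /\ (\sum_(s < S) L s)%N = N.

(* access a square matrix with nat indices (0 outside the range) *)
Definition natmx (F : pzRingType) (N : nat) (A : 'M[F]_N) (i j : nat) : F :=
  match @insub _ (fun k => k < N)%N 'I_N i, @insub _ (fun k => k < N)%N 'I_N j with
  | Some i', Some j' => A i' j'
  | _, _ => 0
  end.

Definition blockmx (S N : nat) (L : 'I_S -> nat) (A : 'M[R]_N) (s : 'I_S)
  : 'M[R]_(L s) :=
  \matrix_(i < L s, j < L s) natmx A (Nstart L s + i) (Nstart L s + j).

Definition distinct_eigs (F : fieldType) (n : nat) (A : 'M[F]_n) : Prop :=
  exists e : 'I_n -> F, injective e /\ forall i, eigenvalue A (e i).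

Definition admissible (S N : nat) (L : 'I_S -> nat) (Wd : 'M[R]_N) : Prop :=
  [/\ Wd^T = Wd,
      (forall i j : 'I_N, i != j -> 0 <= Wd i j),
      (forall i : 'I_N, \sum_(j < N) Wd i j = 0),
      distinct_eigs Wd &
      (forall s : 'I_S, distinct_eigs (blockmx L Wd s))].

Definition Gamma (S : nat) (beta : 'I_S -> R) : Prop :=
  forall (k : int), k != 0 -> forall s1 s2 : 'I_S, s1 != s2 ->
    expi (- 2 * pi * k%:~R * beta s1) != expi (- 2 * pi * k%:~R * beta s2).

Definition Dmx (S N : nat) (L : 'I_S -> nat) (k : nat) (beta : 'I_S -> R)
  : 'M[R[i]]_N :=
  diag_mx (\row_(j < N) \sum_(s < S | inB L s j) expi (- 2 * pi * k%:R * beta s)).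

Definition Weps (N : nat) (Wd : 'M[R]_N) (eps : R) : 'M[R[i]]_N :=
  1%:M + (eps%:C) *: map_mx (fun x : R => x%:C) Wd.

Definition Pmx (S N : nat) (L : 'I_S -> nat) (k : nat) (beta : 'I_S -> R)
  (Wd : 'M[R]_N) (eps : R) : 'M[R[i]]_N :=
  Dmx N L k beta *m Weps Wd eps.

Definition cdot (N : nat) (v w : 'cV[R[i]]_N) : R[i] :=
  \sum_(j < N) v j 0 * (w j 0)^*.

End Defs.

(* topology on R[i]: the metric topology of its norm (as for any numFieldType) *)
HB.instance Definition _ (R : realType) := PseudoPointedMetric.copy R[i] (R[i])^o.

(* Main.v *)
Require Import Defs.
From HB Require Import structures.
From mathcomp Require Import all_boot all_order all_algebra.
From mathcomp Require Import all_classical all_reals all_analysis.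
From mathcomp Require Import complex.
Import Order.TTheory GRing.Theory Num.Theory.
Import numFieldNormedType.Exports.
Local Open Scope ring_scope.
Local Open Scope classical_set_scope.

From mathcomp Require Import lra ring zify.
Local Open Scope complex_scope.
Section T. Context {R : realType}.
Local Notation C := R[i].
Lemma normC_real (r : R) : `|r%:C| = `|r|%:C.
Proof. by rewrite normc_def /= expr0n addr0 sqrtr_sqr. Qed.
Lemma posC (x : R[i]) : 0 < x -> exists2 r : R, 0 < r & x = r%:C.
Proof. case: x => a b; rewrite ltcE /= => /andP[/eqP -> H]; by exists a. Qed.
Lemma near0_small (K r : R) : 0 < r -> \forall e \near (0:R)^'+, 0 < e /\ K * e < r.
Proof.
move=> r0; have H : 0 < r / (`|K| + 1) by rewrite divr_gt0 // ltr_wpDl.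
apply: filterS2 (nbhs_right_gt (0:R)) (nbhs_right_lt H) => e e0 er; split=> //.
have hK : K <= `|K| := ler_norm K.
have : (`|K| + 1) * e < r.
  by rewrite -ltr_pdivlMl ?ltr_wpDl // mulrC.
nra.
Qed.

Definition bO (h : R -> C) := exists K : R, \forall e \near (0:R)^'+, `|h e| <= (K * e)%:C.
Definition bnd (h : R -> C) := exists K : R, \forall e \near (0:R)^'+, `|h e| <= K%:C.

Lemma bO_le {h1 h2} : (\forall e \near (0:R)^'+, `|h1 e| <= `|h2 e|) -> bO h2 -> bO h1.
Proof. move=> H [K HK]; exists K; apply: filterS2 H HK => e; exact: le_trans. Qed.

Lemma bO0 : bO (fun=> 0).
Proof. exists 0; apply: filterE => e; by rewrite normr0 mul0r. Qed.

Lemma bO_add {h1 h2} : bO h1 -> bO h2 -> bO (fun e => h1 e + h2 e).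
Proof.
move=> [K1 H1] [K2 H2]; exists (K1 + K2); apply: filterS2 H1 H2 => e H1 H2.
by rewrite mulrDl rmorphD (le_trans (ler_normD _ _)) // lerD.
Qed.

Lemma bO_opp {h} : bO h -> bO (fun e => - h e).
Proof. apply: bO_le; apply: filterE => e; by rewrite normrN. Qed.

Lemma bO_sub {h1 h2} : bO h1 -> bO h2 -> bO (fun e => h1 e - h2 e).
Proof. by move=> H1 H2; apply: bO_add H1 (bO_opp H2). Qed.

Lemma bO_sum (I : Type) (r : seq I) (P : pred I) (F : I -> R -> C) :
  (forall i, P i -> bO (F i)) -> bO (fun e => \sum_(i <- r | P i) F i e).
Proof.
move=> H; elim: r => [|x r IH].
  by apply: bO_le bO0; apply: filterE => e; rewrite big_nil.
case Px: (P x).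
  apply: bO_le (bO_add (H x Px) IH); apply: filterE => e; by rewrite big_cons Px.
apply: bO_le IH; apply: filterE => e; by rewrite big_cons Px.
Qed.

Lemma bnd_cst c : bnd (fun=> c).
Proof. exists (complex.Re `|c|); apply: filterE => e. by rewrite RRe_real // normr_real. Qed.

Lemma bnd_mul {g h} : bnd g -> bnd h -> bnd (fun e => g e * h e).
Proof.
move=> [K1 H1] [K2 H2]; exists (K1 * K2); apply: filterS2 H1 H2 => e H1 H2.
by rewrite normrM rmorphM ler_pM.
Qed.

Lemma bnd_add {g h} : bnd g -> bnd h -> bnd (fun e => g e + h e).
Proof.
move=> [K1 H1] [K2 H2]; exists (K1 + K2); apply: filterS2 H1 H2 => e H1 H2.
by rewrite rmorphD (le_trans (ler_normD _ _)) // lerD.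
Qed.

Lemma bnd_sum (I : Type) (r : seq I) (P : pred I) (F : I -> R -> C) :
  (forall i, P i -> bnd (F i)) -> bnd (fun e => \sum_(i <- r | P i) F i e).
Proof.
move=> H; elim: r => [|x r IH].
  have [K HK] := bnd_cst 0; exists K; apply: filterS HK => e; by rewrite big_nil.
case Px: (P x).
  have [K HK] := bnd_add (H x Px) IH; exists K; apply: filterS HK => e; by rewrite big_cons Px.
have [K HK] := IH; exists K; apply: filterS HK => e; by rewrite big_cons Px.
Qed.

Lemma bO_mull {g h} : bnd g -> bO h -> bO (fun e => g e * h e).
Proof.
move=> [K1 H1] [K2 H2]; exists (K1 * `|K2|).
apply: filterS3 H1 H2 (nbhs_right_gt (0:R)) => e H1 H2 e0.
rewrite normrM -mulrA rmorphM ler_pM //.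
apply: le_trans H2 _; rewrite lecR; apply: ler_wpM2r; [exact: ltW | exact: ler_norm].
Qed.

Lemma bO_mulr {g h} : bnd g -> bO h -> bO (fun e => h e * g e).
Proof. move=> Hg Hh; apply: bO_le (bO_mull Hg Hh); apply: filterE => e; by rewrite mulrC. Qed.

Lemma bO_cvg {h} : bO h -> h @ (0:R)^'+ --> (0 : C).
Proof.
move=> [K HK]; apply/(@cvgr0Pnorm_lt _ (R[i])^o) => eps /posC [r r0 ->].
apply: filterS2 HK (near0_small K r r0) => e H [e0 Ke].
by apply: le_lt_trans H _; rewrite ltcR.
Qed.

Lemma bO_sq {h} : bO (fun e => h e * conjc (h e)) -> h @ (0:R)^'+ --> (0 : C).
Proof.
move=> [K HK]; apply/(@cvgr0Pnorm_lt _ (R[i])^o) => eps /posC [r r0 ->].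
have r20 : 0 < r ^+ 2 by rewrite exprn_gt0.
apply: filterS2 HK (near0_small K _ r20) => e H [e0 Ke].
rewrite -sqr_normc ger0_norm ?sqr_ge0 // in H.
rewrite -(ltr_pXn2r (_ : (0 < 2)%N)) ?inE ?normr_ge0 ?ler0c ?ltW //.
by apply: le_lt_trans H _; rewrite -rmorphXn ltcR. by rewrite qualifE /= ler0c ltW.
Qed.
End T.

Section O. Context {R : realType}.
Lemma ortho_basis (n : nat) (A : 'M[R]_n) : A^T = A -> distinct_eigs A ->
  exists (M : 'M[R]_n) (th : 'I_n -> R), [/\ injective th, M^T *m M = 1%:M &
    forall j p, \sum_q M j q * A q p = th j * M j p].
Proof.
move=> AT [th [thi eig]].
have /fin_all_exists [v Hv] : forall j, exists v : 'rV[R]_n, (v *m A = th j *: v) /\ v != 0.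
  by move=> j; have /eigenvalueP [v h1 h2] := eig j; exists v.
pose nr j := \sum_p v j 0 p ^+ 2.
have nrE j k : (v j *m (v k)^T) 0 0 = \sum_p v j 0 p * v k 0 p.
  by rewrite mxE; apply: eq_bigr => p _; rewrite mxE.
have orth j k : j != k -> \sum_p v j 0 p * v k 0 p = 0.
  move=> jk; rewrite -nrE.
  have e1 : v j *m A *m (v k)^T = th j *: (v j *m (v k)^T) by rewrite (proj1 (Hv j)) scalemxAl.
  have e2 : v j *m A *m (v k)^T = th k *: (v j *m (v k)^T).
    by rewrite -mulmxA -{1}AT -trmx_mul (proj1 (Hv k)) linearZ /= -scalemxAr.
  have : (th j - th k) *: (v j *m (v k)^T) = 0 by rewrite scalerBl -e1 -e2 subrr.
  move/eqP; rewrite scaler_eq0 subr_eq0 (inj_eq thi) (negbTE jk) /= => /eqP ->.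
  by rewrite mxE.
have nrpos j : 0 < nr j.
  rewrite lt_def sumr_ge0 ?andbT; last by move=> p _; rewrite sqr_ge0.
  apply/eqP => h; case/negP: (proj2 (Hv j)); apply/eqP/rowP => p; rewrite mxE.
  have := @psumr_eq0P _ _ _ _ (fun p _ => sqr_ge0 (v j 0 p)) h p isT.
  by move/eqP; rewrite sqrf_eq0 => /eqP.
pose M := \matrix_(j, p) ((Num.sqrt (nr j))^-1 * v j 0 p).
exists M, th; split => //.
  apply: mulmx1C; apply/matrixP => j k; rewrite !mxE.
  under eq_bigr do rewrite !mxE mulrACA.
  rewrite -mulr_sumr.
  case: (eqVneq j k) => [<-|jk]; last by rewrite orth // mulr0.
  rewrite -invfM -expr2 sqr_sqrtr ?ltW // mulVf ?gt_eqF //.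
move=> j p; rewrite /M mxE.
under eq_bigr do rewrite mxE -mulrA.
rewrite -mulr_sumr.
have := congr1 (fun m : 'rV_n => m 0 p) (proj1 (Hv j)); rewrite !mxE => ->.
by rewrite mulrCA.
Qed.
End O.

Section Coord.
Context {R : realType}.
Local Notation C := R[i].
Variables (n : nat) (M : 'M[R]_n).
Hypothesis HM : M^T *m M = 1%:M.

Lemma Mcol p q : \sum_j M j p * M j q = (p == q)%:R.
Proof.
have := congr1 (fun A : 'M[R]_n => A p q) HM; rewrite !mxE => <-.
by apply: eq_bigr => j _; rewrite mxE.
Qed.

Lemma Mpair (x y : 'I_n -> C) :
  \sum_j (\sum_p (M j p)%:C * x p) * (\sum_q (M j q)%:C * y q) = \sum_p x p * y p.
Proof.
have E j : (\sum_p (M j p)%:C * x p) * (\sum_q (M j q)%:C * y q) =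
    \sum_p \sum_q (M j p * M j q)%:C * (x p * y q).
  rewrite mulr_suml; apply: eq_bigr => p _; rewrite mulr_sumr; apply: eq_bigr => q _.
  rewrite rmorphM; ring.
rewrite (eq_bigr _ (fun j _ => E j)) exchange_big /=; apply: eq_bigr => p _.
rewrite exchange_big /=.
under eq_bigr do rewrite -mulr_suml -rmorph_sum Mcol.
rewrite (bigD1 p) //= eqxx big1 ?addr0 /=; first by rewrite mul1r.
by move=> q /negbTE; rewrite eq_sym => ->; rewrite mul0r.
Qed.
End Coord.

Section Expand.
Context {R : realType}.
Local Notation C := R[i].
Lemma conjcD' (x y : C) : conjc (x + y) = conjc x + conjc y. Proof. exact: rmorphD. Qed.
Lemma conjcM' (x y : C) : conjc (x * y) = conjc x * conjc y. Proof. exact: rmorphM. Qed.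
Lemma conjc_sum' (I : Type) (r : seq I) (P : pred I) (G : I -> C) :
  conjc (\sum_(i <- r | P i) G i) = \sum_(i <- r | P i) conjc (G i).
Proof. exact: rmorph_sum. Qed.

Lemma expand (n : nat) (al be : 'I_n -> C) :
  (\sum_j al j * conjc (be j)) * conjc (\sum_k al k * conjc (be k)) =
  (\sum_j al j * be j) * conjc (\sum_k al k * be k) +
  \sum_j \sum_k al j * conjc (al k) * (conjc (be j) * be k - be j * conjc (be k)).
Proof.
rewrite !conjc_sum' !mulr_suml -big_split /=; apply: eq_bigr => j _.
rewrite !mulr_sumr -big_split /=; apply: eq_bigr => k _.
rewrite !conjcM' conjcK; ring.
Qed.
End Expand.

Section B.
Variables (S N : nat) (L : 'I_S -> nat).
Definition Pre (m : nat) := (\sum_(t < S | (t < m)%N) L t)%N.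
Lemma Pre_succ m (Hm : (m < S)%N) : Pre m.+1 = (Pre m + L (Ordinal Hm))%N.
Proof.
rewrite /Pre (bigID (fun t : 'I_S => (t < m)%N)) /=.
congr (_ + _)%N.
  by apply: eq_bigl => t; case: (ltnP t m) => h; rewrite ?andbT ?andbF //; lia.
rewrite (big_pred1 (Ordinal Hm)) // => t /=.
by rewrite -val_eqE /= ltnS -leqNgt -eqn_leq.
Qed.
Lemma Pre_mono m m' : (m <= m')%N -> (Pre m <= Pre m')%N.
Proof.
move=> le; rewrite /Pre [X in (_ <= X)%N](bigID (fun t : 'I_S => (t < m)%N)) /=.
apply: leq_trans (leq_addr _ _); apply: eq_leq; apply: eq_bigl => t.
by case: (ltnP t m) => h; rewrite ?andbT ?andbF // (leq_trans h le).
Qed.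
Lemma Pre_S : Pre S = (\sum_(s < S) L s)%N.
Proof. by apply: eq_bigl => t; rewrite ltn_ord. Qed.
Lemma NstartE s : Nstart L s = Pre s. Proof. by []. Qed.
Lemma inB_uniq s t i : inB L s i -> inB L t i -> s = t.
Proof.
rewrite /inB !NstartE => /andP[h1 h2] /andP[h3 h4].
wlog: s t h1 h2 h3 h4 / (s < t)%N.
  move=> W; case: (ltngtP s t) => [st|ts|/val_inj //]; first exact: W.
  by apply/esym/W.
move=> st; have := @Pre_mono s.+1 t st; rewrite (@Pre_succ s (ltn_ord s)).
have -> : Ordinal (ltn_ord s) = s by apply: val_inj.
lia.
Qed.
Lemma inB_cover i : (\sum_(s < S) L s)%N = N -> (i < N)%N -> exists s, inB L s i.
Proof.
move=> HN iN.
have ex : exists m, (i < Pre m.+1)%N && (m < S)%N.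
  exists S.-1; have S0 : (0 < S)%N.
    rewrite lt0n; apply/eqP => S0; move: iN; rewrite -HN big1 // => s.
    by move: (ltn_ord s); rewrite {2}S0.
  rewrite prednK //; apply/andP; split; last lia.
  by rewrite Pre_S HN.
case: (ex_minnP ex) => m /andP[im mS] Hmin.
exists (Ordinal mS); rewrite /inB NstartE /=.
have -> : L (Ordinal mS) = (Pre m.+1 - Pre m)%N by rewrite (@Pre_succ m mS); lia.
have mono := @Pre_mono m m.+1 (leqnSn m).
have lo : (Pre m <= i)%N.
  case: m im mS Hmin mono => [|m] im mS Hmin mono.
    by rewrite /Pre big_pred0 // => t; rewrite ltn0.
  case: (ltnP i (Pre m.+1)) => // h.
  have := Hmin m; rewrite h (ltnW mS) /= => /(_ isT); lia.
apply/andP; split => //; lia.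
Qed.
End B.

Section M.
Variables (R : realType) (S N : nat) (L : 'I_S -> nat) (Wd : 'M[R]_N)
  (k : nat) (beta : 'I_S -> R) (gamma : R)
  (f : R -> 'I_N -> 'cV[R[i]]_N) (lambda : R -> 'I_N -> R[i]).
Hypotheses (HL : bandwidth N L) (HW : admissible L Wd) (HG : Gamma beta) (g0 : 0 < gamma)
  (Heig : forall eps, 0 < eps < gamma ->
     [/\ injective (lambda eps),
         (forall l, Pmx L k beta Wd eps *m f eps l = lambda eps l *: f eps l) &
         (forall l, cdot (f eps l) (f eps l) = 1)])
  (Hlim : forall (s : 'I_S) (l : 'I_N), inB L s l ->
     lambda^~ l @ (0:R)^'+ --> expi (- 2 * pi * k%:R * beta s)).
Local Notation C := R[i].
Let c s := expi (- 2 * pi * k%:R * beta s).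
Let F (e : R) (l i : 'I_N) : C := f e l i 0.
Let Wv (e : R) (x : 'I_N -> C) i := x i + e%:C * \sum_j (Wd i j)%:C * x j.

Lemma expi_conj (x : R) : expi x * (expi x)^* = 1.
Proof.
rewrite /expi /=; apply/eqP; rewrite eq_complex /=; apply/andP; split; apply/eqP.
  by rewrite mulrN opprK -!expr2 cos2Dsin2.
by rewrite mulrN mulrC addNr.
Qed.

Lemma expi_norm (x : R) : `|expi x| = 1.
Proof. by rewrite normc_def /= cos2Dsin2 sqrtr1. Qed.

Lemma WdT i j : Wd i j = Wd j i.
Proof. by case: HW => /matrixP /(_ j i); rewrite mxE. Qed.

Lemma Wv_swap e (x y : 'I_N -> C) : \sum_i Wv e x i * y i = \sum_i x i * Wv e y i.
Proof.
rewrite /Wv.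
under eq_bigr do rewrite mulrDl.
under [in RHS]eq_bigr do rewrite mulrDr.
rewrite !big_split /=; congr (_ + _).
under eq_bigr do rewrite -mulrA mulr_suml.
under [in RHS]eq_bigr do rewrite mulrCA mulr_sumr.
rewrite -!mulr_sumr; congr (_ * _).
rewrite [LHS]exchange_big /=; apply: eq_bigr => i _; apply: eq_bigr => j _.
by rewrite WdT mulrCA mulrA.
Qed.

Lemma conjcD (x y : C) : conjc (x + y) = conjc x + conjc y. Proof. exact: rmorphD. Qed.
Lemma conjcM (x y : C) : conjc (x * y) = conjc x * conjc y. Proof. exact: rmorphM. Qed.
Lemma conjcN (x : C) : conjc (- x) = - conjc x. Proof. exact: rmorphN. Qed.
Lemma conjc_sum (I : Type) (r : seq I) (P : pred I) (G : I -> C) :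
  conjc (\sum_(i <- r | P i) G i) = \sum_(i <- r | P i) conjc (G i).
Proof. exact: rmorph_sum. Qed.
Lemma conjcR (x : R) : conjc (x%:C) = x%:C. Proof. exact: conjc_real. Qed.

Lemma Wv_conj e (y : 'I_N -> C) i : conjc (Wv e y i) = Wv e (fun j => conjc (y j)) i.
Proof.
rewrite /Wv conjcD conjcM conjc_sum conjcR; congr (_ + _ * _).
by apply: eq_bigr => j _; rewrite conjcM conjcR.
Qed.

Lemma cdotE (v w : 'cV[C]_N) : cdot v w = \sum_j v j 0 * conjc (w j 0).
Proof. by []. Qed.

Lemma blkP : exists blk : 'I_N -> 'I_S, forall i, inB L (blk i) i.
Proof.
have /fin_all_exists [blk Hb] : forall i : 'I_N, exists s : 'I_S, inB L s i.
  move=> i; exact: (@inB_cover S N L i (proj2 HL) (ltn_ord i)).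
by exists blk.
Qed.

Variable blk : 'I_N -> 'I_S.
Hypothesis Hblk : forall i, inB L (blk i) i.

Lemma blk_uniq s (i : 'I_N) : inB L s i -> s = blk i.
Proof. move=> h; exact: (@inB_uniq S L s (blk i) i h (Hblk i)). Qed.

Lemma dsum (i : 'I_N) : \sum_(s < S | inB L s i) expi (- 2 * pi * k%:R * beta s) = c (blk i).
Proof.
rewrite (big_pred1 (blk i)) // => s.
by apply/idP/eqP => [/blk_uniq|->] //; exact: Hblk.
Qed.

Lemma WepsE e (x : 'I_N -> C) i : \sum_j Weps Wd e i j * x j = Wv e x i.
Proof.
rewrite /Wv /Weps.
under eq_bigr do rewrite !mxE mulrDl.
rewrite big_split /= (bigD1 i) //= eqxx mul1r big1 ?addr0; last first.
  by move=> j /negbTE; rewrite eq_sym => ->; rewrite mul0r.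
by congr (_ + _); rewrite mulr_sumr; apply: eq_bigr => j _; rewrite mulrA.
Qed.

Lemma row_eq e l i : 0 < e < gamma -> c (blk i) * Wv e (F e l) i = lambda e l * F e l i.
Proof.
move=> He; have [_ H _] := Heig e He.
have := congr1 (fun M : 'cV_N => M i 0) (H l).
rewrite /Pmx -mulmxA /Dmx mul_diag_mx mxE [in X in X = _ -> _]mxE dsum.
rewrite [in X in _ = X -> _]mxE [in X in X = _ -> _]mxE.
by rewrite (WepsE e (F e l) i).
Qed.

Lemma F_le1 e l i : 0 < e < gamma -> `|F e l i| <= 1.
Proof.
move=> He; have [_ _ H] := Heig e He.
have := H l; rewrite cdotE => h.
have : `|F e l i| ^+ 2 <= 1.
  rewrite -h sqr_normc (bigD1 i) //= lerDl sumr_ge0 // => j _.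
  exact: mulcJ_ge0.
by rewrite expr_le1.
Qed.
Lemma c_k0 s : k = 0%N -> c s = 1.
Proof.
move=> k0; rewrite /c k0 mulr0 mul0r /expi cos0 sin0; by [].
Qed.

Lemma herm_k0 e l m : k = 0%N -> 0 < e < gamma ->
  lambda e l * cdot (f e l) (f e m) = conjc (lambda e m) * cdot (f e l) (f e m).
Proof.
move=> k0 He; rewrite !cdotE !mulr_sumr.
have rl i : Wv e (F e l) i = lambda e l * F e l i by rewrite -row_eq // c_k0 // mul1r.
have rm i : Wv e (F e m) i = lambda e m * F e m i by rewrite -row_eq // c_k0 // mul1r.
transitivity (\sum_i Wv e (F e l) i * conjc (F e m i)).
  by apply: eq_bigr => i _; rewrite rl mulrA.
rewrite (Wv_swap e (F e l) (fun i => conjc (F e m i))).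
apply: eq_bigr => i _; rewrite -Wv_conj rm conjcM; rewrite /F; ring.
Qed.

Lemma case_k0 l m : k = 0%N -> l != m -> forall e, 0 < e < gamma -> cdot (f e l) (f e m) = 0.
Proof.
move=> k0 lm e He; have [inj _ H1] := Heig e He.
have hm := herm_k0 e m m k0 He; rewrite H1 !mulr1 in hm.
have := herm_k0 e l m k0 He; rewrite -hm => /eqP; rewrite -subr_eq0 -mulrBl mulf_eq0.
rewrite subr_eq0 (inj_eq inj) (negbTE lm) /= => /eqP //.
Qed.
Lemma c_neq s t : k != 0%N -> s != t -> c s != c t.
Proof.
move=> k0 st; have k0' : (Posz k != 0)%R by [].
have := @HG (Posz k) k0' s t st.
by rewrite /c -!pmulrn.
Qed.

Lemma c_norm s : `|c s| = 1.
Proof. exact: expi_norm. Qed.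

Lemma c_conj s : c s * conjc (c s) = 1.
Proof. exact: expi_conj. Qed.

Lemma in_range : \forall e \near (0:R)^'+, 0 < e < gamma.
Proof.
by apply: filterS2 (nbhs_right_gt (0:R)) (nbhs_right_lt g0) => e h1 h2; rewrite h1 h2.
Qed.

Lemma OB l i : k != 0%N -> blk i != blk l -> bO (fun e => F e l i).
Proof.
move=> k0 bil.
have cl := @Hlim (blk l) l (Hblk l).
have dpos : 0 < `|c (blk i) - c (blk l)| by rewrite normr_gt0 subr_eq0 c_neq.
have [dr dr0 dE] := posC _ dpos.
have dr2 : 0 < dr / 2 by rewrite divr_gt0.
have Hn : \forall t \near (0:R)^'+, `|c (blk l) - lambda t l| < (dr/2)%:C.
  by move/(@cvgrPdist_lt _ (R[i])^o): cl; apply; rewrite ltcR.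
pose K := \sum_j `|Wd i j|.
exists (2 / dr * K).
apply: filterS2 Hn in_range => e Hl He.
have e0 : 0 < e by case/andP: He.
have re := row_eq e l i He; rewrite /Wv in re.
set w := \sum_j _ in re.
have wK : `|w| <= K%:C.
  rewrite /w /K rmorph_sum; apply: le_trans (ler_norm_sum _ _ _) _.
  apply: ler_sum => j _; rewrite normrM normC_real -[X in _ <= X]mulr1 ler_wpM2l //.
  by rewrite ler0c. exact: F_le1.
have eq1 : (c (blk i) - lambda e l) * F e l i = - (c (blk i) * e%:C * w).
  by rewrite mulrBl -re; ring.
have low : (dr / 2)%:C <= `|c (blk i) - lambda e l|.
  have : `|c (blk i) - c (blk l)| <= `|c (blk i) - lambda e l| + `|c (blk l) - lambda e l|.
    by rewrite (distrC (c (blk l))); exact: ler_distD.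
  rewrite dE => h; rewrite -(lerD2r `|c (blk l) - lambda e l|).
  apply: le_trans _ h; rewrite [X in _ <= X](_ : dr%:C = (dr/2)%:C + (dr/2)%:C); first by rewrite lerD2l ltW.
  by rewrite -rmorphD; congr (_%:C); field.
have key : (dr / 2)%:C * `|F e l i| <= (e * K)%:C.
  apply: le_trans (_ : `|c (blk i) - lambda e l| * `|F e l i| <= _).
    by rewrite ler_wpM2r.
  rewrite -normrM eq1 normrN !normrM c_norm mul1r normC_real (gtr0_norm e0) rmorphM.
  by rewrite ler_wpM2l // ler0c ltW.
rewrite -(ler_pM2l (_ : 0 < (dr / 2)%:C)) ?ltcR //; apply: le_trans key _.
rewrite -rmorphM lecR le_eqVlt; apply/orP; left; apply/eqP; field.
by rewrite gt_eqF.
Qed.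
Lemma bndF (l j : 'I_N) : bnd (fun e : R => F e l j).
Proof. exists 1; apply: filterS in_range => e He; exact: F_le1. Qed.

Lemma bnd_conj {h : R -> C} : bnd h -> bnd (fun e => conjc (h e)).
Proof. move=> [K HK]; exists K; apply: filterS HK => e; by rewrite normcJ. Qed.

Lemma bO_conj {h : R -> C} : bO h -> bO (fun e => conjc (h e)).
Proof. apply: bO_le; apply: filterE => e; by rewrite normcJ. Qed.

Lemma cross (l m : 'I_N) : k != 0%N -> blk l != blk m -> bO (fun e => cdot (f e l) (f e m)).
Proof.
move=> k0 lm.
apply: (bO_le (h2 := fun e => \sum_i F e l i * conjc (F e m i))).
  by apply: filterE => e; rewrite cdotE.
apply: bO_sum => i _; case: (eqVneq (blk i) (blk l)) => h.
  have him : blk i != blk m by rewrite h.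
  exact: (bO_mull (bndF l i) (bO_conj (OB m i k0 him))).
exact: (bO_mulr (bnd_conj (bndF m i)) (OB l i k0 h)).
Qed.

Lemma NB s : (Nstart L s + L s <= N)%N.
Proof.
have h := @Pre_succ S L s (ltn_ord s).
have e : Ordinal (ltn_ord s) = s by apply: val_inj.
rewrite e in h; rewrite NstartE -h -(proj2 HL) -Pre_S; exact: Pre_mono.
Qed.
Lemma ix_lt s (p : 'I_(L s)) : (Nstart L s + p < N)%N.
Proof. have := NB s; have := ltn_ord p; lia. Qed.

Definition ix s (p : 'I_(L s)) : 'I_N := Ordinal (ix_lt s p).

Lemma blk_ix s p : blk (ix s p) = s.
Proof. symmetry; apply: blk_uniq; rewrite /inB /=; have := ltn_ord p; lia. Qed.

Lemma ix_inj s : injective (ix s).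
Proof. move=> p q [] /addnI h; exact: val_inj h. Qed.

Lemma sum_split s (h : 'I_N -> C) :
  \sum_i h i = \sum_p h (ix s p) + \sum_(i | blk i != s) h i.
Proof.
rewrite (bigID (fun i => blk i == s)) /=; congr (_ + _).
have p0 : 'I_(L s) := Ordinal (proj1 HL s).
rewrite (reindex_onto (ix s) (fun i : 'I_N => insubd p0 (i - Nstart L s)%N)) /=.
  apply: eq_bigl => p; rewrite blk_ix eqxx /=; apply/eqP/val_inj.
  by rewrite val_insubd /= addKn ltn_ord.
move=> i /eqP bi; apply/val_inj; rewrite /= val_insubd.
have := Hblk i; rewrite bi /inB => hi.
case: ifP => h2 /=; lia.
Qed.

Lemma natmxE (A : 'M[R]_N) (i j : 'I_N) : natmx A i j = A i j.
Proof. by rewrite /natmx !valK. Qed.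

Lemma blockE s p q : blockmx L Wd s p q = Wd (ix s p) (ix s q).
Proof. rewrite mxE; exact: (natmxE Wd (ix s p) (ix s q)). Qed.

Lemma block_sym s : (blockmx L Wd s)^T = blockmx L Wd s.
Proof. by apply/matrixP => p q; rewrite mxE !blockE WdT. Qed.
Lemma bnd_opp' {h : R -> C} : bnd h -> bnd (fun e => - h e).
Proof. move=> [K HK]; exists K; apply: filterS HK => e; by rewrite normrN. Qed.

Lemma bO_bnd {h : R -> C} : bO h -> bnd h.
Proof.
move=> [K HK]; exists `|K|.
apply: filterS3 HK (nbhs_right_gt (0:R)) (nbhs_right_lt (@ltr01 R)) => e H e0 e1.
apply: le_trans H _; rewrite lecR.
have := ler_norm K; have := normr_ge0 K; nra.
Qed.

Lemma bnd_e : bnd (fun e : R => e%:C).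
Proof.
exists gamma; apply: filterS in_range => e /andP[e0 eg].
by rewrite normC_real gtr0_norm // lecR ltW.
Qed.

Lemma bnd_inv (l : 'I_N) : bnd (fun e => (lambda e l)^-1) /\ \forall e \near (0:R)^'+, lambda e l != 0.
Proof.
have cl := @Hlim (blk l) l (Hblk l).
have Hn : \forall t \near (0:R)^'+, `|c (blk l) - lambda t l| < (1/2)%:C.
  by move/(@cvgrPdist_lt _ (R[i])^o): cl; apply; rewrite ltcR.
have low : \forall t \near (0:R)^'+, (1/2)%:C <= `|lambda t l|.
  apply: filterS Hn => e h.
  have := lerB_dist (c (blk l)) (c (blk l) - lambda e l).
  rewrite c_norm subKr => h2.
  apply: le_trans h2; apply: le_trans (_ : (1/2)%:C <= 1 - (1/2)%:C) _.
    by rewrite -(rmorph1 (real_complex R)) -rmorphB lecR; lra.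
  by rewrite lerD2l lerN2 ltW.
split.
  exists 2; apply: filterS low => e h.
  have hp : 0 < `|lambda e l| by apply: lt_le_trans h; rewrite ltcR; lra.
  rewrite normfV -(ler_pM2l hp) mulfV ?gt_eqF //.
  apply: le_trans (_ : (1/2)%:C * 2%:C <= _); first by rewrite -rmorphM lecR; lra.
  by rewrite ler_wpM2r // ler0c.
apply: filterS low => e h; rewrite -normr_gt0; apply: lt_le_trans h; rewrite ltcR; lra.
Qed.

Lemma bndWv (m i : 'I_N) : bnd (fun e => Wv e (F e m) i).
Proof.
apply: bnd_add (bndF m i) (bnd_mul bnd_e _).
apply: bnd_sum => j _; exact: bnd_mul (bnd_cst _) (bndF m j).
Qed.
Lemma same_block (l m : 'I_N) : k != 0%N -> l != m -> blk l = blk m ->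
  bO (fun e => cdot (f e l) (f e m) * conjc (cdot (f e l) (f e m))).
Proof.
move=> k0 lm blm.
set s := blk l.
have [_ _ _ _ /(_ s) hs] := HW.
have [M [th [thi HM Heig']]] := @ortho_basis R (L s) (blockmx L Wd s) (block_sym s) hs.
pose u e p := F e l (ix s p).
pose v e p := F e m (ix s p).
pose al e j := \sum_p (M j p)%:C * u e p.
pose be e j := \sum_p (M j p)%:C * v e p.
pose a e := (lambda e l * conjc (c s) - 1) / e%:C.
pose r e p := \sum_(i | blk i != s) (Wd (ix s p) i)%:C * F e l i.
have R1 : forall e, 0 < e < gamma -> forall p,
    \sum_q (blockmx L Wd s p q)%:C * u e q = a e * u e p - r e p.
  move=> e He p; have re := row_eq e l (ix s p) He; rewrite blk_ix /Wv in re.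
  have sp := sum_split s (fun i => (Wd (ix s p) i)%:C * F e l i).
  set w := \sum_j _ in re.
  have e0 : e%:C != 0 by case/andP: He => e0 _; rewrite gt_eqF // ltcR.
  have h1 : conjc (c s) * (c s * (F e l (ix s p) + e%:C * w)) =
      conjc (c s) * (lambda e l * F e l (ix s p)) by rewrite re.
  rewrite mulrA [conjc _ * _]mulrC c_conj mul1r in h1.
  have wE : w = a e * u e p.
    have -> : w = (F e l (ix s p) + e%:C * w - F e l (ix s p)) / e%:C by field.
    by rewrite h1 /a /u; field.
  rewrite -wE /w sp /r addrK; apply: eq_bigr => q _; by rewrite blockE.
have R2 : forall p, bO (fun e => r e p).
  move=> p; apply: bO_sum => i bi; apply: (bO_mull (bnd_cst _) (OB l i k0 bi)).
have bu : forall p, bnd (fun e => u e p) by move=> p; exact: bndF.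
have bv : forall p, bnd (fun e => v e p) by move=> p; exact: bndF.
have bal : forall j, bnd (fun e => al e j).
  by move=> j; apply: bnd_sum => p _; exact: bnd_mul (bnd_cst _) (bu p).
have bbe : forall j, bnd (fun e => be e j).
  by move=> j; apply: bnd_sum => p _; exact: bnd_mul (bnd_cst _) (bv p).
have R3 : forall j, bO (fun e => ((th j)%:C - a e) * al e j).
  move=> j; apply: (bO_le (h2 := fun e => - \sum_p (M j p)%:C * r e p)); last first.
    by apply: bO_opp; apply: bO_sum => p _; exact: (bO_mull (bnd_cst _) (R2 p)).
  apply: filterS in_range => e He; rewrite le_eqVlt; apply/orP; left; apply/eqP; congr (`|_|).
  have E1 : \sum_p (M j p)%:C * (\sum_q (blockmx L Wd s p q)%:C * u e q) = (th j)%:C * al e j.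
    under eq_bigr do rewrite mulr_sumr.
    rewrite exchange_big /= /al mulr_sumr; apply: eq_bigr => q _.
    rewrite [RHS]mulrA -rmorphM -Heig' rmorph_sum mulr_suml; apply: eq_bigr => p _.
    by rewrite rmorphM mulrA.
  have E2 : \sum_p (M j p)%:C * (\sum_q (blockmx L Wd s p q)%:C * u e q) =
      a e * al e j - \sum_p (M j p)%:C * r e p.
    under eq_bigr do rewrite R1 // mulrBr.
    rewrite sumrB /al mulr_sumr; congr (_ - _); apply: eq_bigr => p _; ring.
  rewrite mulrBl -E1 E2; ring.
pose rho e j := ((th j)%:C - a e) * al e j.
have R4 : forall j j', j != j' -> bO (fun e => al e j * conjc (al e j')).
  move=> j j' jk.
  have hne : (th j)%:C - (th j')%:C != 0.
    by rewrite subr_eq0; apply: contra jk => /eqP /complexI /thi ->.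
  have id e : al e j * al e j' =
      ((th j)%:C - (th j')%:C)^-1 * (rho e j * al e j' - rho e j' * al e j).
    by rewrite /rho; field.
  apply: (bO_le (h2 := fun e => ((th j)%:C - (th j')%:C)^-1 * (rho e j * al e j' - rho e j' * al e j))).
    by apply: filterE => e; rewrite normrM normcJ -normrM id.
  exact: (bO_mull (bnd_cst _) (bO_sub (bO_mulr (bal j') (R3 j)) (bO_mulr (bal j) (R3 j')))).
have R5X : forall e, \sum_p u e p * conjc (v e p) = \sum_j al e j * conjc (be e j).
  move=> e; rewrite -(@Mpair R (L s) M HM (u e) (fun p => conjc (v e p))).
  apply: eq_bigr => j _; congr (_ * _); rewrite /be conjc_sum; apply: eq_bigr => q _.
  by rewrite conjcM conjcR.
have R5Y : forall e, \sum_p u e p * v e p = \sum_j al e j * be e j.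
  by move=> e; rewrite -(@Mpair R (L s) M HM (u e) (v e)).
have bilin : forall e, 0 < e < gamma -> \sum_i F e l i * Wv e (F e m) i = 0.
  move=> e He; have [inj _ _] := Heig e He.
  have E : lambda e l * \sum_i F e l i * Wv e (F e m) i =
           lambda e m * \sum_i F e l i * Wv e (F e m) i.
    rewrite mulr_sumr.
    transitivity (\sum_i Wv e (F e l) i * (c (blk i) * Wv e (F e m) i)).
      by apply: eq_bigr => i _; rewrite mulrA -(row_eq e l i He); ring.
    under eq_bigr do rewrite (row_eq e m _ He).
    rewrite -Wv_swap mulr_sumr; apply: eq_bigr => i _; ring.
  move/eqP: E; rewrite -subr_eq0 -mulrBl mulf_eq0 subr_eq0 (inj_eq inj) (negbTE lm) /=.
  by move/eqP.
pose E1 e := \sum_(i | blk i != s) F e l i * Wv e (F e m) i.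
have E1bO : bO E1.
  apply: bO_sum => i bi; exact: (bO_mulr (bndWv m i) (OB l i k0 bi)).
have [binv nz] := bnd_inv m.
have R6 : bO (fun e => \sum_j al e j * be e j).
  apply: (bO_le (h2 := fun e => - E1 e * (c s * (lambda e m)^-1))); last first.
    exact: (bO_mulr (bnd_mul (bnd_cst _) binv) (bO_opp E1bO)).
  apply: filterS2 in_range nz => e He nze.
  rewrite le_eqVlt; apply/orP; left; apply/eqP; congr (`|_|).
  have Hp : \sum_p F e l (ix s p) * Wv e (F e m) (ix s p) =
      conjc (c s) * lambda e m * \sum_p u e p * v e p.
    rewrite mulr_sumr; apply: eq_bigr => p _.
    have rm := row_eq e m (ix s p) He; rewrite blk_ix in rm.
    have -> : Wv e (F e m) (ix s p) = conjc (c s) * (c s * Wv e (F e m) (ix s p)).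
      by rewrite mulrA [conjc _ * _]mulrC c_conj mul1r.
    rewrite rm /u /v; ring.
  have HB := bilin e He; rewrite (sum_split s) Hp addrC in HB.
  have HE : E1 e = - (conjc (c s) * lambda e m * \sum_p u e p * v e p).
    by apply/eqP; rewrite -addr_eq0 /E1 HB.
  rewrite HE opprK -R5Y.
  transitivity ((c s * conjc (c s)) * (\sum_p u e p * v e p) * (lambda e m * (lambda e m)^-1)).
    by rewrite c_conj mulfV // mul1r mulr1.
  ring.
have bY : bnd (fun e => \sum_j al e j * be e j).
  by apply: bnd_sum => j _; exact: bnd_mul (bal j) (bbe j).
pose XB e := \sum_j al e j * conjc (be e j).
have bXB : bnd XB.
  by apply: bnd_sum => j _; exact: bnd_mul (bal j) (bnd_conj (bbe j)).
have R7 : bO (fun e => XB e * conjc (XB e)).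
  apply: (bO_le (h2 := fun e => (\sum_j al e j * be e j) * conjc (\sum_j al e j * be e j) +
    \sum_j \sum_(j' < L s) al e j * conjc (al e j') *
       (conjc (be e j) * be e j' - be e j * conjc (be e j')))).
    by apply: filterE => e; rewrite /XB expand.
  apply: bO_add; first exact: (bO_mulr (bnd_conj bY) R6).
  apply: bO_sum => j _; apply: bO_sum => j' _.
  case: (eqVneq j j') => [<-|jj].
    apply: bO_le bO0; apply: filterE => e.
    by rewrite [be e j * _]mulrC subrr mulr0.
  apply: (bO_mulr _ (R4 j j' jj)).
  apply: bnd_add; first exact: bnd_mul (bnd_conj (bbe j)) (bbe j').
  exact: bnd_opp' (bnd_mul (bbe j) (bnd_conj (bbe j'))).
pose E2 e := \sum_(i | blk i != s) F e l i * conjc (F e m i).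
have E2bO : bO E2.
  apply: bO_sum => i bi; exact: (bO_mulr (bnd_conj (bndF m i)) (OB l i k0 bi)).
have XE : forall e, cdot (f e l) (f e m) = XB e + E2 e.
  by move=> e; rewrite cdotE (sum_split s) /XB /E2 -R5X.
have bX : bnd (fun e => cdot (f e l) (f e m)).
  have [K HK] := bnd_add bXB (bO_bnd E2bO); exists K; apply: filterS HK => e; by rewrite XE.
apply: (bO_le (h2 := fun e => XB e * conjc (XB e) +
   (XB e * conjc (E2 e) + E2 e * conjc (cdot (f e l) (f e m))))).
  apply: filterE => e; rewrite le_eqVlt; apply/orP; left; apply/eqP; congr (`|_|).
  rewrite XE conjcD; ring.
apply: bO_add R7 (bO_add (bO_mull bXB (bO_conj E2bO)) (bO_mulr (bnd_conj bX) E2bO)).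
Qed.
Lemma main_M (l m : 'I_N) : l != m ->
  (fun eps => cdot (f eps l) (f eps m)) @ (0:R)^'+ --> (0 : R[i]).
Proof.
move=> lm; case: (eqVneq k 0%N) => [k0|k0].
  apply: bO_cvg; apply: (bO_le _ bO0); apply: filterS in_range => e He.
  by rewrite (case_k0 l m k0 lm e He) normr0.
case: (eqVneq (blk l) (blk m)) => b.
  exact: (bO_sq (same_block l m k0 lm b)).
exact: (bO_cvg (cross l m k0 b)).
Qed.
End M.

Local Close Scope complex_scope.

Theorem lemma4p4 (R : realType) (S N : nat) (L : 'I_S -> nat) (Wd : 'M[R]_N)
  (k : nat) (beta : 'I_S -> R) (gamma : R)
  (f : R -> 'I_N -> 'cV[R[i]]_N) (lambda : R -> 'I_N -> R[i]) :
  (1 < S)%N -> (S <= N)%N ->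
  bandwidth N L ->
  admissible L Wd ->
  Gamma beta ->
  0 < gamma ->
  (forall eps, 0 < eps < gamma -> distinct_eigs (Pmx L k beta Wd eps)) ->
  (forall eps, 0 < eps < gamma ->
     [/\ injective (lambda eps),
         (forall l, Pmx L k beta Wd eps *m f eps l = lambda eps l *: f eps l) &
         (forall l, cdot (f eps l) (f eps l) = 1)]) ->
  (forall (s : 'I_S) (l : 'I_N), inB L s l ->
     lambda^~ l @ 0^'+ --> expi (- 2 * pi * k%:R * beta s)) ->
  forall l m : 'I_N, l != m ->
    (fun eps => cdot (f eps l) (f eps m)) @ 0^'+ --> (0 : R[i]).
Proof.
move=> S1 SN HL HW HG g0 _ Heig Hlim l m lm.
have [blk Hblk] := blkP _ _ _ HL.
exact: (main_M _ _ _ _ _ _ _ _ _ _ HL HW HG g0 Heig Hlim _ Hblk _ _ lm).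
Qed.
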